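(* $\mathrm{1QFA}/n\neq\mathrm{1QFA}/Rn$.
   Context: A 1qfa is a one-way measure-many quantum finite automaton. For equal-length strings $x,y$, $\genfrac{[}{]}{0pt}{}{x}{y}$ is the two-track string with $x$ on the upper track and $y$ on the lower track. $\mathrm{1QFA}/n$ is the family of languages $L$ for which there exist a 1qfa $M$, $\varepsilon\in[0,1/2)$ and a deterministic advice function $h:\mathbb{N}\to\Gamma^*$ with $|h(n)|=n$ such that $M$ on $\genfrac{[}{]}{0pt}{}{x}{h(|x|)}$ outputs $L(x)$ with probability at least $1-\varepsilon$ for every $x$. $\mathrm{1QFA}/Rn$ is defined analogously with randomized advice, i.e. a probability ensemble $\{D_n\}$ ($D_n$ a distribution on $\Gamma^n$), where $M$ on $\genfrac{[}{]}{0pt}{}{x}{y}$ with $y\sim D_n$ outputs $L(x)$ with probability at least $1-\varepsilon$. *)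

(* Defs.v *)
From HB Require Import structures.
From mathcomp Require Import all_boot all_order all_algebra.
From mathcomp Require Import complex.
From mathcomp Require Import Rstruct.
Set Implicit Arguments. Unset Strict Implicit. Unset Printing Implicit Defensive.
Import Order.TTheory GRing.Theory Num.Theory.
Local Open Scope ring_scope.

Notation RR := Rdefinitions.R.
Notation CC := (RR[i]).

Definition sqmod (z : CC) : RR := complex.Re z ^+ 2 + complex.Im z ^+ 2.

Definition adjmx k (U : 'M[CC]_k) : 'M[CC]_k := (map_mx (@conjc RR) U)^T.

Definition unitary k (U : 'M[CC]_k) : Prop := U *m adjmx U = 1%:M.

(* A measure-many one-way quantum finite automaton (Kondacs-Watrous) over
   input alphabet A, with k inner states 'I_k, initial state q0, halting
   accepting / rejecting state sets, and a time-evolution matrix for each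
   tape symbol: the left endmarker (Ucent), the right endmarker (Udollar)
   and each input symbol (Usym a). *)
Record qfa (A : Type) := QFA {
  qfa_k : nat;
  qfa_q0 : 'I_qfa_k;
  qfa_Ucent : 'M[CC]_qfa_k;
  qfa_Udollar : 'M[CC]_qfa_k;
  qfa_Usym : A -> 'M[CC]_qfa_k;
  qfa_acc : {set 'I_qfa_k};
  qfa_rej : {set 'I_qfa_k}
}.

Definition qfa_wf A (M : qfa A) : Prop :=
  [/\ unitary (qfa_Ucent M), unitary (qfa_Udollar M),
      (forall a, unitary (qfa_Usym M a)) & [disjoint qfa_acc M & qfa_rej M]].

Section Run.
Variables (A : Type) (M : qfa A).
Local Notation k := (qfa_k M).

Definition projS (S : {set 'I_k}) (v : 'cV[CC]_k) : 'cV[CC]_k :=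
  \col_i (if i \in S then v i 0 else 0).

Definition sqnorm (v : 'cV[CC]_k) : RR := \sum_i sqmod (v i 0).

Definition qfa_non : {set 'I_k} := ~: (qfa_acc M :|: qfa_rej M).

(* One step: apply U to the (unnormalized) non-halting part, then measure
   with respect to the acc / rej / non-halting decomposition; accumulate
   the accept and reject probabilities. *)
Definition qfa_step (st : 'cV[CC]_k * RR * RR) (U : 'M[CC]_k)
  : 'cV[CC]_k * RR * RR :=
  let: (psi, pa, pr) := st in
  let phi := U *m psi in
  (projS qfa_non phi, pa + sqnorm (projS (qfa_acc M) phi),
                      pr + sqnorm (projS (qfa_rej M) phi)).

Definition qfa_init : 'cV[CC]_k := \col_i (i == qfa_q0 M)%:R.

Definition qfa_run (w : seq A) : 'cV[CC]_k * RR * RR :=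
  foldl qfa_step (qfa_init, 0, 0)
    (qfa_Ucent M :: rcons (map (qfa_Usym M) w) (qfa_Udollar M)).

Definition acc_prob (w : seq A) : RR := (qfa_run w).1.2.
Definition rej_prob (w : seq A) : RR := (qfa_run w).2.

Definition out_prob (b : bool) (w : seq A) : RR :=
  if b then acc_prob w else rej_prob w.
End Run.

Definition track2 (S G : Type) (x : seq S) (y : seq G) : seq (S * G) := zip x y.

Definition in_1QFA_n (S : finType) (L : pred (seq S)) : Prop :=
  exists (G : finType) (M : qfa (S * G)) (eps : RR) (h : forall n, n.-tuple G),
    [/\ qfa_wf M, 0 <= eps, eps < 1/2 &
        forall x : seq S, out_prob M (L x) (track2 x (h (size x))) >= 1 - eps].

Definition in_1QFA_Rn (S : finType) (L : pred (seq S)) : Prop :=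
  exists (G : finType) (M : qfa (S * G)) (eps : RR)
         (D : forall n, {ffun n.-tuple G -> RR}),
    [/\ qfa_wf M, 0 <= eps, eps < 1/2,
        forall n, (forall y, 0 <= D n y) /\ \sum_y D n y = 1 &
        forall x : seq S,
          \sum_(y : (size x).-tuple G) D (size x) y * out_prob M (L x) (track2 x y)
            >= 1 - eps].

(* Main.v *)
Require Import Defs.
From HB Require Import structures.
From mathcomp Require Import all_boot all_order all_algebra.
From mathcomp Require Import complex Rstruct ring lra fingroup perm zmodp zify.
Set Implicit Arguments. Unset Strict Implicit. Unset Printing Implicit Defensive.
Import Order.TTheory GRing.Theory Num.Theory.
Local Open Scope ring_scope.
Local Open Scope complex_scope.

Lemma sqmod_ge0 (z : CC) : 0 <= sqmod z.
Proof. by rewrite /sqmod addr_ge0 // sqr_ge0. Qed.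

Lemma sqmodE (z : CC) : (conjc z * z) = (sqmod z)%:C.
Proof.
case: z => a b; rewrite /sqmod /=; apply/eqP; rewrite eq_complex /=.
rewrite !expr2; apply/andP; split; apply/eqP; ring.
Qed.

Lemma sqmod0 : sqmod 0 = 0.
Proof. by rewrite /sqmod /= expr0n addr0. Qed.

Lemma sqmod1 : sqmod 1 = 1.
Proof. by rewrite /sqmod /= expr0n addr0 expr1n. Qed.

Section Gen.
Variables (A : Type) (M : qfa A).
Local Notation k := (qfa_k M).
Local Notation sq := (sqnorm (M:=M)).

Definition cvadj (v : 'cV[CC]_k) : 'rV[CC]_k := (map_mx (@conjc RR) v)^T.

Lemma cvadjE v : (cvadj v *m v) 0 0 = (sq v)%:C.
Proof.
rewrite !mxE /sqnorm rmorph_sum /=; apply: eq_bigr => i _.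
by rewrite !mxE sqmodE.
Qed.

Lemma cvadjM (U : 'M[CC]_k) v : cvadj (U *m v) = cvadj v *m adjmx U.
Proof. by rewrite /cvadj /adjmx map_mxM trmx_mul. Qed.

Lemma sq_unitary (U : 'M[CC]_k) v : unitary U -> sq (U *m v) = sq v.
Proof.
move=> /mulmx1C HU.
have : (cvadj (U *m v) *m (U *m v)) 0 0 = (cvadj v *m v) 0 0.
  by rewrite cvadjM -mulmxA (mulmxA (adjmx U)) HU mul1mx.
rewrite !cvadjE => /eqP; rewrite eq_complex /= eqxx andbT => /eqP //.
Qed.

Lemma projSE (S : {set 'I_k}) v i : (projS S v) i 0 = if i \in S then v i 0 else 0.
Proof. by rewrite mxE. Qed.

Lemma projSD S (a b : 'cV[CC]_k) : projS S (a + b) = projS S a + projS S b.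
Proof. by apply/matrixP => i j; rewrite (ord1 j) !mxE; case: (i \in S); rewrite ?addr0. Qed.

Lemma projSB S (a b : 'cV[CC]_k) : projS S (a - b) = projS S a - projS S b.
Proof. by apply/matrixP => i j; rewrite (ord1 j) !mxE; case: (i \in S); rewrite ?subr0. Qed.

Lemma sq_ge0 v : 0 <= sq v.
Proof. by apply: sumr_ge0 => i _; apply: sqmod_ge0. Qed.

Lemma sq_proj3 w : [disjoint qfa_acc M & qfa_rej M] ->
  sq (projS (qfa_non M) w) + sq (projS (qfa_acc M) w) + sq (projS (qfa_rej M) w) <= sq w.
Proof.
move=> dis; rewrite /sqnorm -!big_split /=; apply: ler_sum => i _.
rewrite !projSE /qfa_non in_setC in_setU.
case: (boolP (i \in qfa_acc M)) => ha.
  by rewrite (disjointFr dis ha) /= sqmod0 add0r addr0.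
case: (boolP (i \in qfa_rej M)) => hr /=; by rewrite ?sqmod0 ?add0r ?addr0.
Qed.

Fixpoint accf (v : 'cV[CC]_k) (Us : seq 'M[CC]_k) : RR :=
  if Us is U :: Us' then sq (projS (qfa_acc M) (U *m v)) + accf (projS (qfa_non M) (U *m v)) Us'
  else 0.
Fixpoint rejf (v : 'cV[CC]_k) (Us : seq 'M[CC]_k) : RR :=
  if Us is U :: Us' then sq (projS (qfa_rej M) (U *m v)) + rejf (projS (qfa_non M) (U *m v)) Us'
  else 0.
Fixpoint vecf (v : 'cV[CC]_k) (Us : seq 'M[CC]_k) : 'cV[CC]_k :=
  if Us is U :: Us' then vecf (projS (qfa_non M) (U *m v)) Us' else v.

Lemma run_split Us v a r :
  foldl (@qfa_step _ M) (v, a, r) Us = (vecf v Us, a + accf v Us, r + rejf v Us).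
Proof.
elim: Us v a r => [|U Us IH] v a r /=; first by rewrite !addr0.
by rewrite IH !addrA.
Qed.

Lemma run_split' Us (st : 'cV[CC]_k * RR * RR) :
  foldl (@qfa_step _ M) st Us = (vecf st.1.1 Us, st.1.2 + accf st.1.1 Us, st.2 + rejf st.1.1 Us).
Proof. by case: st => [[v a] r]; apply: run_split. Qed.

Lemma accf_ge0 v Us : 0 <= accf v Us.
Proof. by elim: Us v => [|U Us IH] v //=; rewrite addr_ge0 ?sq_ge0. Qed.
Lemma rejf_ge0 v Us : 0 <= rejf v Us.
Proof. by elim: Us v => [|U Us IH] v //=; rewrite addr_ge0 ?sq_ge0. Qed.

Lemma conserv Us v : qfa_wf M -> (forall U, U \in Us -> unitary U) ->
  sq (vecf v Us) + accf v Us + rejf v Us <= sq v.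
Proof.
case=> _ _ _ dis; elim: Us v => [|U Us IH] v /=; first by rewrite !addr0.
move=> hUs; have hU : unitary U by apply: hUs; rewrite mem_head.
have {}IH v' := IH v' (fun U' h => hUs U' (introT orP (or_intror h))).
have := IH (projS (qfa_non M) (U *m v)).
have := sq_proj3 (U *m v) dis; rewrite sq_unitary //.
move: (sq (vecf _ _)) (accf _ _) (rejf _ _) => x y z.
move: (sq (projS _ _)) (sq (projS (qfa_acc M) _)) (sq (projS (qfa_rej M) _)) => p q s.
move=> h1 h2; lra.
Qed.

Lemma sqmod_lip (l : RR) (x y : CC) :
  2 * l * (sqmod x - sqmod y) <= sqmod (x - y) + l ^+ 2 * sqmod (x + y).
Proof.
case: x => x1 x2; case: y => y1 y2; rewrite /sqmod /=.
have h1 := sqr_ge0 (x1 - y1 - l * (x1 + y1)).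
have h2 := sqr_ge0 (x2 - y2 - l * (x2 + y2)).
rewrite !expr2 in h1 h2 *; nra.
Qed.

Lemma sq_lip (l : RR) (v w : 'cV[CC]_k) :
  2 * l * (sq v - sq w) <= sq (v - w) + l ^+ 2 * sq (v + w).
Proof.
rewrite /sqnorm -sumrB mulr_sumr mulr_sumr -big_split /=.
apply: ler_sum => i _; rewrite !mxE; exact: sqmod_lip.
Qed.

Lemma accf_lip (l : RR) Us : qfa_wf M -> (forall U, U \in Us -> unitary U) ->
  forall v w, 2 * l * (accf v Us - accf w Us) <= sq (v - w) + l ^+ 2 * sq (v + w).
Proof.
move=> wf; have [_ _ _ dis] := wf.
elim: Us => [|U Us IH] hUs v w /=.
  by rewrite subrr mulr0 addr_ge0 ?sq_ge0 // mulr_ge0 ?sqr_ge0 ?sq_ge0.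
have hU : unitary U by apply: hUs; rewrite mem_head.
have {}IH := IH (fun U' h => hUs U' (introT orP (or_intror h))).
have e1 := IH (projS (qfa_non M) (U *m v)) (projS (qfa_non M) (U *m w)).
have e2 := sq_lip l (projS (qfa_acc M) (U *m v)) (projS (qfa_acc M) (U *m w)).
rewrite -!projSB -!projSD -mulmxBr -mulmxDr in e1 e2.
have p1 := sq_proj3 (U *m (v - w)) dis.
have p2 := sq_proj3 (U *m (v + w)) dis.
rewrite !sq_unitary // in p1 p2.
have r1 := sq_ge0 (projS (qfa_rej M) (U *m (v - w))).
have r2 := sq_ge0 (projS (qfa_rej M) (U *m (v + w))).
have l2 := sqr_ge0 l.
move: e1 e2 p1 p2 r1 r2 l2.
move: (sq (projS _ (U *m (v - w)))) (sq (projS (qfa_acc M) (U *m (v - w)))) (sq (projS (qfa_rej M) (U *m (v - w)))).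
move: (sq (projS _ (U *m (v + w)))) (sq (projS (qfa_acc M) (U *m (v + w)))) (sq (projS (qfa_rej M) (U *m (v + w)))).
move=> a1 a2 a3 b1 b2 b3; move: (l ^+ 2) => L; nra.
Qed.
End Gen.

Lemma sqmod_le_sq A (M : qfa A) (v : 'cV[CC]_(qfa_k M)) i : sqmod (v i 0) <= sqnorm v.
Proof.
rewrite /sqnorm (bigD1 i) //= lerDl; apply: sumr_ge0 => j _; exact: sqmod_ge0.
Qed.

Lemma sq_init A (M : qfa A) : sqnorm (qfa_init M) = 1.
Proof.
rewrite /sqnorm (bigD1 (qfa_q0 M)) //= !mxE eqxx sqmod1 big1 ?addr0 // => i /negbTE hi.
by rewrite !mxE hi sqmod0.
Qed.

Lemma sq_add_le A (M : qfa A) (v w : 'cV[CC]_(qfa_k M)) :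
  sqnorm (v + w) <= 2 * sqnorm v + 2 * sqnorm w.
Proof.
rewrite /sqnorm !mulr_sumr -big_split /=; apply: ler_sum => i _; rewrite !mxE.
case: (v i 0) => a b; case: (w i 0) => c d; rewrite /sqmod /=.
have := sqr_ge0 (a - c); have := sqr_ge0 (b - d); rewrite !expr2 => *; nra.
Qed.

Definition Leq : pred (seq bool) :=
  fun x => take (size x)./2 x == drop (size x - (size x)./2) x.

Lemma Leq_cat (u v : seq bool) : size u = size v -> Leq (u ++ v) = (u == v).
Proof.
move=> e; rewrite /Leq size_cat -e addnn doubleK -addnn addnK.
by rewrite take_size_cat // drop_size_cat.
Qed.

Section Lower.
Variables (G : finType) (M : qfa (bool * G)) (h : forall n, n.-tuple G).
Local Notation k := (qfa_k M).

Definition pre (m : nat) (u : seq bool) :=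
  foldl (@qfa_step _ M) (qfa_init M, 0, 0)
    (qfa_Ucent M :: map (qfa_Usym M) (zip u (take m (h (m + m))))).
Definition suf (m : nat) (v : seq bool) :=
  rcons (map (qfa_Usym M) (zip v (drop m (h (m + m))))) (qfa_Udollar M).

Lemma run_cat m (u v : seq bool) : size u = m -> size v = m ->
  qfa_run M (track2 (u ++ v) (h (size (u ++ v)))) = foldl (@qfa_step _ M) (pre m u) (suf m v).
Proof.
move=> su sv; rewrite size_cat su sv /qfa_run /track2 /pre /suf.
rewrite -{1}(cat_take_drop m (h (m + m))) zip_cat; last first.
  by rewrite su size_take size_tuple ltn_neqAle leq_addr andbT; case: (m =P m + m).
by rewrite map_cat rcons_cat -cat_cons foldl_cat.
Qed.
End Lower.

Lemma trunc_bounds (x : RR) : 0 <= x -> (Num.trunc x)%:R <= x < (Num.trunc x).+1%:R.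
Proof. by move=> x0; rewrite truncn_le x0 /= -truncn_le_nat. Qed.

Lemma cell_close (gam : RR) (B : nat) (c c' : RR) : 0 < gam ->
  -1 <= c <= 1 -> -1 <= c' <= 1 -> Num.trunc (2 / gam) = B ->
  (inord (Num.trunc ((c + 1) / gam)) : 'I_B.+1) = inord (Num.trunc ((c' + 1) / gam)) ->
  - gam < c - c' < gam.
Proof.
move=> g0 /andP[c1 c2] /andP[c1' c2'] eB e.
have gi : 0 <= gam^-1 by rewrite invr_ge0 ltW.
have hx (z : RR) : -1 <= z <= 1 -> 0 <= (z + 1) / gam /\ (Num.trunc ((z + 1) / gam) < B.+1)%N.
  case/andP => z1 z2; split; first by rewrite mulr_ge0 // -lerBlDr sub0r.
  rewrite ltnS -eB; apply: le_truncn; apply: ler_wpM2r => //; lra.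
have [x0 xB] := hx c (introT andP (conj c1 c2)).
have [x0' xB'] := hx c' (introT andP (conj c1' c2')).
have := congr1 val e; rewrite /= !inordK // => et.
have /andP[b1 b2] := trunc_bounds x0; have /andP[b1' b2'] := trunc_bounds x0'.
rewrite et in b1 b2.
have -> : c - c' = gam * ((c + 1) / gam - (c' + 1) / gam).
  by field; rewrite gt_eqF.
move: b1 b2 b1' b2'; move: ((c + 1) / gam) ((c' + 1) / gam) => y y'.
rewrite -natr1 => b1 b2 b1' b2'; apply/andP; split; nra.
Qed.

Lemma pre_bound (G : finType) (M : qfa (bool * G)) h m u : qfa_wf M ->
  let st := pre M h m u in
  0 <= st.1.2 /\ 0 <= st.2 /\ sqnorm st.1.1 + st.1.2 + st.2 <= 1.
Proof.
move=> wf /=; rewrite /pre run_split !add0r.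
have [hc hd hs _] := wf.
split; first exact: accf_ge0. split; first exact: rejf_ge0.
rewrite -(sq_init M); apply: conserv => // U; rewrite in_cons => /orP[/eqP->//|].
by case/mapP => p _ ->.
Qed.

Lemma suf_unitary (G : finType) (M : qfa (bool * G)) h m v : qfa_wf M ->
  forall U, U \in suf M h m v -> unitary U.
Proof.
case=> hc hd hs _ U; rewrite /suf mem_rcons in_cons => /orP[/eqP->//|].
by case/mapP => p _ ->.
Qed.

Lemma lower (G : finType) (M : qfa (bool * G)) (eps : RR) (h : forall n, n.-tuple G) :
  qfa_wf M -> eps < 1/2 ->
  ~ (forall x, 1 - eps <= out_prob M (Leq x) (track2 x (h (size x)))).
Proof.
move=> wf heps H.
pose k := qfa_k M.
pose d := 1 - 2 * eps.
have d0 : 0 < d by rewrite /d; lra.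
pose K : RR := k%:R.
have K0 : 0 <= K by rewrite /K ler0n.
pose gam := d / (8 * (K + 1)).
have hg : gam * (8 * (K + 1)) = d by rewrite /gam; field; rewrite gt_eqF //; lra.
have g0 : 0 < gam by rewrite /gam divr_gt0 //; lra.
pose B := Num.trunc (2 / gam).
pose cell (c : RR) : 'I_B.+1 := inord (Num.trunc ((c + 1) / gam)).
pose T := option ('I_k * bool).
pose m := #|{ffun T -> 'I_B.+1}|.
pose key (u : m.-tuple bool) : {ffun T -> 'I_B.+1} :=
  let st := pre M h m u in
  [ffun o : T => match o with None => cell st.1.2
    | Some (i, b) => cell (if b then complex.Re (st.1.1 i 0) else complex.Im (st.1.1 i 0)) end].
have : ~~ injectiveb key.
  apply/injectiveP => /leq_card; rewrite card_tuple card_bool -/m.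
  by rewrite leqNgt ltn_expl.
case/injectivePn => u [u' neq ek].
pose st := pre M h m u; pose st' := pre M h m u'.
have [a0 [r0 c0]] := pre_bound h m u wf.
have [a0' [r0' c0']] := pre_bound h m u' wf.
rewrite -/st in a0 r0 c0; rewrite -/st' in a0' r0' c0'.
have s0 := sq_ge0 st.1.1; have s0' := sq_ge0 st'.1.1.
have ran (c : 'cV[CC]_k) i : sqnorm c <= 1 -> -1 <= complex.Re (c i 0) <= 1 /\ -1 <= complex.Im (c i 0) <= 1.
  move=> hc; have := sqmod_le_sq c i; rewrite /sqmod.
  move: (complex.Re _) (complex.Im _) => p q hpq; split; apply/andP; split; nra.
have close (o : T) : key u o = key u' o by rewrite ek.
rewrite /key in close.
have hsq : sqnorm (st.1.1 - st'.1.1) <= K * (2 * gam ^+ 2).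
  rewrite /sqnorm; apply: le_trans (_ : \sum_(i < k) (2 * gam ^+ 2) <= _).
    apply: ler_sum => i _; rewrite !mxE.
    have := close (Some (i, true)); have := close (Some (i, false)); rewrite !ffunE /=.
    have [hr hi] := ran st.1.1 i ltac:(lra); have [hr' hi'] := ran st'.1.1 i ltac:(lra).
    move=> /(cell_close g0 hi hi' erefl) hI /(cell_close g0 hr hr' erefl) hR.
    rewrite /sqmod; case: (st.1.1 i 0) hI hR => p q; case: (st'.1.1 i 0) => p' q' /=.
    move=> /andP[i1 i2] /andP[r1 r2]; nra.
  by rewrite sumr_const card_ord -[_ *+ k]mulr_natl.
have ha : - gam < st.1.2 - st'.1.2 < gam.
  have := close None; rewrite !ffunE /=; apply: cell_close => //; try (apply/andP; split); rewrite -?/st -?/st'; lra.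
have su : size u = m by rewrite size_tuple.
have su' : size u' = m by rewrite size_tuple.
have H1 := H (u ++ u).
rewrite Leq_cat // eqxx /out_prob /acc_prob (@run_cat _ M h m _ _ su su) in H1.
have := H (u' ++ u); rewrite Leq_cat; last by rewrite su su'. case: (tval u' =P tval u) => [e|_] H2; first by move: neq; rewrite (val_inj e) eqxx.
rewrite /out_prob /rej_prob (@run_cat _ M h m _ _ su' su) in H2.
rewrite run_split' /= -/st in H1.
rewrite run_split' /= -/st' in H2.
have cons' := conserv st'.1.1 wf (@suf_unitary _ M h m u wf).
have sq0 := sq_ge0 (vecf st'.1.1 (suf M h m u)).
pose l := d / 8.
have lip := accf_lip l wf (@suf_unitary _ M h m u wf) st.1.1 st'.1.1.
have hadd := sq_add_le st.1.1 st'.1.1.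
have hl : 2 * l = d / 4 by rewrite /l; field.
have gd : gam <= d / 8.
  rewrite -hg; nra.
have gd2 : K * (2 * gam ^+ 2) <= d ^+ 2 / 32.
  rewrite -hg; nra.
move: H1 H2 cons' sq0 lip hadd hsq ha hl gd gd2 a0 r0 c0 a0' r0' c0' s0 s0'.
move: (accf st.1.1 _) (accf st'.1.1 _) (rejf st'.1.1 _) (sqnorm (vecf _ _)).
move: (sqnorm (st.1.1 - st'.1.1)) (sqnorm (st.1.1 + st'.1.1)) (sqnorm st.1.1) (sqnorm st'.1.1).
move: st.1.2 st.2 st'.1.2 st'.2 => A1 R1 A2 R2 D P S1 S2 F1 F2 Rj V.
rewrite /d => *; nra.
Qed.
Definition sh (c : 'I_6) : {perm 'I_6} := perm (addrI c).
Definition Pm (c : 'I_6) : 'M[CC]_6 := (perm_mx (sh c))^T.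
Definition ev (q : 'I_6) : 'cV[CC]_6 := \col_i (i == q)%:R.

Lemma shE c q : sh c q = c + q.
Proof. by rewrite permE. Qed.

Lemma Pm_unitary c : unitary (Pm c).
Proof.
rewrite /unitary /adjmx /Pm map_trmx trmxK (map_perm_mx (@conjc RR)).
by rewrite tr_perm_mx -perm_mxM mulVg perm_mx1.
Qed.

Lemma Pm_ev c q : Pm c *m ev q = ev (c + q).
Proof.
apply/matrixP => i j; rewrite (ord1 j) !mxE (bigD1 q) //= big1 ?addr0.
  by rewrite !mxE eqxx mulr1 shE eq_sym.
by move=> p /negbTE hp; rewrite !mxE hp mulr0.
Qed.

Definition Eset : pred 'I_6 := fun q => ~~ odd q.
Lemma E_add (c q : 'I_6) : Eset c -> Eset q -> Eset (c + q).
Proof. by case: c => [[|[|[|[|[|[|//]]]]]] ?]; case: q => [[|[|[|[|[|[|//]]]]]] ?]. Qed.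

Definition accS : {set 'I_6} := [set i : 'I_6 | val i == 1%N].
Definition rejS : {set 'I_6} := [set i : 'I_6 | (val i == 3%N) || (val i == 5%N)].

Definition M6 : qfa (bool * 'I_6) :=
  @QFA _ 6 ord0 (Pm 0) (Pm 1) (fun p => Pm (if p.1 then p.2 else 0)) accS rejS.

Lemma M6_wf : qfa_wf M6.
Proof.
split; try (move=> ?); try exact: Pm_unitary.
rewrite disjoint_subset; apply/subsetP => i; rewrite !inE; case: i => [[|[|[|[|[|[|//]]]]]] ?] //=.
Qed.

Lemma projS_ev (S : {set 'I_6}) p :
  @projS _ M6 S (ev p) = if p \in S then ev p else 0.
Proof.
apply/matrixP => i j; rewrite (ord1 j) !mxE.
case: (boolP (i == p)) => [/eqP->|hip]; first by case: (p \in S); rewrite ?mxE ?eqxx.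
by case: (i \in S); case: (p \in S); rewrite ?mxE ?(negbTE hip).
Qed.

Lemma sq_ev p : @sqnorm _ M6 (ev p) = 1.
Proof.
rewrite /sqnorm (bigD1 p) //= !mxE eqxx sqmod1 big1 ?addr0 // => i /negbTE hi.
by rewrite !mxE hi sqmod0.
Qed.

Lemma sq_0 : @sqnorm _ M6 0 = 0.
Proof. by rewrite /sqnorm big1 // => i _; rewrite mxE sqmod0. Qed.

Lemma step_ev c q pa pr :
  @qfa_step _ M6 (ev q, pa, pr) (Pm c) =
  (@projS _ M6 (qfa_non M6) (ev (c + q)),
   pa + ((c + q) \in accS)%:R, pr + ((c + q) \in rejS)%:R).
Proof.
rewrite /qfa_step Pm_ev !projS_ev /=.
by case: (_ \in accS); case: (_ \in rejS); rewrite ?sq_ev ?sq_0.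
Qed.

Lemma E_non q : Eset q -> q \in qfa_non M6.
Proof. by rewrite /qfa_non !inE; case: q => [[|[|[|[|[|[|//]]]]]] ?]. Qed.
Lemma E_acc q : Eset q -> (q \in accS) = false.
Proof. by rewrite !inE; case: q => [[|[|[|[|[|[|//]]]]]] ?]. Qed.
Lemma E_rej q : Eset q -> (q \in rejS) = false.
Proof. by rewrite !inE; case: q => [[|[|[|[|[|[|//]]]]]] ?]. Qed.
Lemma fin_acc s : Eset s -> ((1 + s) \in accS) = (s == 0).
Proof. by rewrite !inE; case: s => [[|[|[|[|[|[|//]]]]]] ?]. Qed.
Lemma fin_rej s : Eset s -> ((1 + s) \in rejS) = (s != 0).
Proof. by rewrite !inE; case: s => [[|[|[|[|[|[|//]]]]]] ?]. Qed.

Lemma run_E cs q pa pr : Eset q -> all Eset cs ->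
  foldl (@qfa_step _ M6) (ev q, pa, pr) (map Pm cs) = (ev (q + \sum_(c <- cs) c), pa, pr).
Proof.
elim: cs q => [|c cs IH] q hq; first by rewrite /= big_nil addr0.
case/andP => hc hcs.
change (foldl (@qfa_step _ M6) (@qfa_step _ M6 (ev q, pa, pr) (Pm c)) (map Pm cs) = (ev (q + \sum_(c0 <- c :: cs) c0), pa, pr)).
rewrite step_ev projS_ev E_non ?E_add // E_acc ?E_add //.
rewrite E_rej ?E_add // !addr0 IH ?E_add // big_cons addrA [c + q]addrC //.
Qed.

Definition dbl (t : 'I_3) : 'I_6 := inord (2 * t).
Definition quad (t : 'I_3) : 'I_6 := inord ((4 * t) %% 6).
Lemma dblE t : (dbl t : nat) = (2 * t)%N.
Proof. by rewrite /dbl inordK //; case: t => [[|[|[|]]]]. Qed.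
Lemma quadE t : (quad t : nat) = ((4 * t) %% 6)%N.
Proof. by rewrite /quad inordK // ltn_pmod. Qed.
Lemma E_dbl t : Eset (dbl t).
Proof. rewrite /Eset /= dblE; case: t => [[|[|[|//]]] ?]; reflexivity. Qed.
Lemma E_quad t : Eset (quad t).
Proof. rewrite /Eset /= quadE; case: t => [[|[|[|//]]] ?]; reflexivity. Qed.
Lemma dbl_quad t : dbl t + quad t = 0.
Proof. apply: val_inj; rewrite /= dblE quadE; case: t => [[|[|[|//]]] ?]; reflexivity. Qed.
Lemma dbl_S t : dbl (t + 1) = dbl t + inord 2.
Proof. apply: val_inj; rewrite /= !dblE inordK //; case: t => [[|[|[|//]]] ?]; reflexivity. Qed.
Lemma quad_S t : quad (t + 1) = quad t + inord 4.
Proof. apply: val_inj; rewrite /= !quadE inordK //; case: t => [[|[|[|//]]] ?]; reflexivity. Qed.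

Definition advf n (t : {ffun 'I_(n./2) -> 'I_3}) (i : nat) : 'I_6 :=
  if (insub i : option 'I_(n./2)) is Some j then dbl (t j)
  else if (n - n./2 <= i)%N then
    (if (insub (i - (n - n./2))%N : option 'I_(n./2)) is Some j then quad (t j) else 0)
  else 0.

Lemma enc_proof n (f : nat -> 'I_6) : size (mkseq f n) == n.
Proof. by rewrite size_mkseq. Qed.
Definition enc n (t : {ffun 'I_(n./2) -> 'I_3}) : n.-tuple 'I_6 :=
  Tuple (enc_proof n (@advf n t)).

Lemma E_advf n t i : Eset (@advf n t i).
Proof.
rewrite /advf; case: insub => [j|]; first exact: E_dbl.
case: leqP => _ //; case: insub => [j|] //; exact: E_quad.
Qed.

Definition csym (p : bool * 'I_6) : 'I_6 := if p.1 then p.2 else 0.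

Lemma out_M6 b w : all (fun p => Eset p.2) w ->
  out_prob M6 b w = if b then ((\sum_(p <- w) csym p) == 0)%:R
                    else ((\sum_(p <- w) csym p) != 0)%:R.
Proof.
move=> hw.
have hc0 : all Eset (map csym w).
  rewrite all_map; apply/allP => p /(allP hw) hp; rewrite /= /csym.
  by case: p.1.
have hc : all Eset (0 :: map csym w) by rewrite -cat1s all_cat hc0 andbT.
have e : qfa_run M6 w = foldl (@qfa_step _ M6)
   (foldl (@qfa_step _ M6) (ev 0, 0, 0) (map Pm (0 :: map csym w))) [:: Pm 1].
  rewrite /qfa_run -foldl_cat /= -cats1 -map_comp.
  congr (foldl _ (_, _, _) (_ :: _ ++ _)).
have es : Eset (\sum_(p <- w) csym p).
  have -> : \sum_(p <- w) csym p = \sum_(c <- map csym w) c by rewrite big_map.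
  elim: (map csym w) hc0 => [|c cs IH]; first by rewrite big_nil.
  by rewrite big_cons => /andP[h1 h2]; apply: E_add => //; apply: IH.
rewrite /out_prob /acc_prob /rej_prob e run_E //.
have -> : foldl (@qfa_step _ M6) (ev (0 + \sum_(c <- 0 :: map csym w) c), 0, 0) [:: Pm 1]
   = @qfa_step _ M6 (ev (\sum_(p <- w) csym p), 0, 0) (Pm 1).
  by rewrite big_cons big_map !add0r.
rewrite step_ev /= !add0r fin_acc ?fin_rej //.
Qed.

Lemma zip_mkseq (x : seq bool) (f : nat -> 'I_6) n : size x = n ->
  zip x (mkseq f n) = mkseq (fun i => (nth false x i, f i)) n.
Proof.
move=> sx; apply: (@eq_from_nth _ (false, 0)); first by rewrite size_zip !size_mkseq sx minnn.
move=> i; rewrite size_zip size_mkseq sx minnn => hi.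
by rewrite nth_zip ?size_mkseq // !nth_mkseq.
Qed.

Definition hashf n (x : seq bool) (t : {ffun 'I_(n./2) -> 'I_3}) (j : 'I_(n./2)) : 'I_6 :=
  (if nth false x j then dbl (t j) else 0) +
  (if nth false x (j + (n - n./2)) then quad (t j) else 0).

Lemma hash_sum n (x : seq bool) t : size x = n ->
  \sum_(p <- track2 x (@enc n t)) csym p = \sum_(j < n./2) hashf x t j.
Proof.
move=> sx; rewrite /track2 /= zip_mkseq // /mkseq big_map.
set m := n./2; set r := (n - m)%N.
have hn := odd_double_half n; rewrite -/m in hn.
have hm : (m <= r)%N by rewrite /r; rewrite -addnn in hn; lia.
have hr : (r <= n)%N by rewrite /r leq_subr.
have nr : (n - r = m)%N by rewrite /r; rewrite -addnn in hn; lia.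
set F := fun i => csym (nth false x i, @advf n t i).
have -> : \sum_(i <- iota 0 n) F i = \sum_(0 <= i < n) F i by rewrite /index_iota subn0.
rewrite (@big_cat_nat _ _ _ m 0 n _ F (leq0n m) (leq_trans hm hr)) (@big_cat_nat _ _ _ r m n _ F hm hr) /=.
rewrite [X in _ + (X + _)]big_nat_cond [X in _ + (X + _)]big1; last first.
  move=> i /andP[/andP[hi1 hi2] _]; rewrite /F /csym /advf insubN -?leqNgt //.
  by rewrite leqNgt hi2 /=; case: nth.
rewrite add0r -{1}(add0n r) big_addn nr !big_mkord -big_split /=.
apply: eq_bigr => j _; rewrite /F /csym /hashf /advf /= valK.
rewrite insubN; last by rewrite -leqNgt; apply: leq_trans hm (leq_addl _ _).
by rewrite leq_addl addnK valK.
Qed.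

Lemma all_zip2 (x : seq bool) (s : seq 'I_6) : all Eset s -> all (fun p => Eset p.2) (zip x s).
Proof.
elim: x s => [|b x IH] [|c s] //= /andP[hc hs]; rewrite hc /=; exact: IH.
Qed.

Lemma all_enc n t : all Eset (@enc n t).
Proof. by apply/allP => c /mapP [i _ ->]; apply: E_advf. Qed.

Lemma fin3 (s d : 'I_6) : Eset s -> Eset d -> d != 0 ->
  ((s == 0%R) + ((s + d)%R == 0%R) + ((s + d + d)%R == 0%R) <= 1)%N.
Proof.
by case: s => [[|[|[|[|[|[|//]]]]]] ?]; case: d => [[|[|[|[|[|[|//]]]]]] ?].
Qed.

Lemma Leq_nth n (x : seq bool) : size x = n ->
  Leq x = [forall j : 'I_(n./2), nth false x j == nth false x (j + (n - n./2))].
Proof.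
move=> sx; rewrite /Leq sx.
have hn := odd_double_half n; rewrite -addnn in hn.
have hm : (n./2 <= n)%N by lia.
have nr : (n - (n - n./2) = n./2)%N by lia.
apply/eqP/forallP.
  move=> e j; have := congr1 (fun s => nth false s j) e.
  by rewrite nth_take // nth_drop addnC => ->.
move=> h; apply: (@eq_from_nth _ false).
  by rewrite size_takel ?sx // size_drop sx nr.
move=> i; rewrite size_takel ?sx // => hi.
by rewrite nth_take // nth_drop addnC; apply/eqP; exact: (h (Ordinal hi)).
Qed.

Lemma E_hash n x t j : Eset (@hashf n x t j).
Proof.
rewrite /hashf; apply: E_add; case: nth => //; [exact: E_dbl | exact: E_quad].
Qed.

Lemma E_S n x t : Eset (\sum_(j < n./2) @hashf n x t j).
Proof.
apply: (big_ind (fun q => Eset q)) => //; [by move=> a b; apply: E_add | move=> j _; exact: E_hash].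
Qed.

Lemma Leq_hash n x t : size x = n -> Leq x -> \sum_(j < n./2) @hashf n x t j = 0.
Proof.
move=> sx; rewrite (Leq_nth sx) => /forallP h; apply: big1 => j _.
by rewrite /hashf -(eqP (h j)); case: nth; rewrite ?dbl_quad ?addr0.
Qed.

Lemma count_bad n x : size x = n -> ~~ Leq x ->
  3 * \sum_(t : {ffun 'I_(n./2) -> 'I_3}) ((\sum_(j < n./2) @hashf n x t j == 0)%:R : RR)
    <= (3 ^ n./2)%:R.
Proof.
move=> sx; rewrite (Leq_nth sx) => /forallPn [j0 hj0].
set m := n./2; set r := (n - m)%N.
pose sg (t : {ffun 'I_m -> 'I_3}) : {ffun 'I_m -> 'I_3} :=
  [ffun j => if j == j0 then t j + 1 else t j].
have sginj : injective sg.
  move=> t t' /ffunP e; apply/ffunP => j; have := e j; rewrite !ffunE.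
  by case: (j == j0) => // /addIr.
pose S t := \sum_(j < m) @hashf n x t j.
pose d : 'I_6 := (if nth false x j0 then inord 2 else 0) + (if nth false x (j0 + r) then inord 4 else 0).
have hS t : S (sg t) = S t + d.
  rewrite /S (bigD1 j0) //= [in RHS](bigD1 j0) //=.
  rewrite (eq_bigr (fun j => hashf x t j)); last first.
    by move=> j hj; rewrite /hashf !ffunE (negbTE hj).
  rewrite /hashf /d !ffunE eqxx dbl_S quad_S.
  case: nth; case: nth; rewrite ?addr0 ?add0r; ring.
have Ed : Eset d && (d != 0).
  move: hj0; rewrite /d; case: nth; case: nth => //= _; rewrite ?addr0 ?add0r.
    by apply/andP; split; rewrite /Eset ?inordK //; apply/eqP => /(congr1 val); rewrite /= inordK.
  by apply/andP; split; rewrite /Eset ?inordK //; apply/eqP => /(congr1 val); rewrite /= inordK.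
case/andP: Ed => Ed dn0.
pose g (t : {ffun 'I_m -> 'I_3}) : RR := (S t == 0)%:R.
have e1 : \sum_t g t = \sum_t g (sg t) by apply: reindex_inj.
have e2 : \sum_t g t = \sum_t g (sg (sg t)) by apply: reindex_inj; apply: inj_comp.
have -> : 3 * \sum_t g t = \sum_t (g t + g (sg t) + g (sg (sg t))).
  by rewrite !big_split /= -e1 -e2; ring.
apply: le_trans (_ : \sum_(t : {ffun 'I_m -> 'I_3}) (1 : RR) <= _).
  apply: ler_sum => t _; rewrite /g !hS -!natrD lern1.
  by apply: fin3 => //; apply: E_S.
by rewrite sumr_const card_ffun !card_ord.
Qed.

Definition Dn n : {ffun n.-tuple 'I_6 -> RR} :=
  [ffun y => \sum_(t : {ffun 'I_(n./2) -> 'I_3}) ((@enc n t == y)%:R / (3 ^ n./2)%:R)].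

Lemma D_avg n (P : n.-tuple 'I_6 -> RR) :
  \sum_y Dn n y * P y = \sum_(t : {ffun 'I_(n./2) -> 'I_3}) P (@enc n t) / (3 ^ n./2)%:R.
Proof.
rewrite /Dn; under eq_bigr do rewrite ffunE mulr_suml.
rewrite exchange_big /=; apply: eq_bigr => t _.
rewrite (bigD1 (@enc n t)) //= eqxx big1 ?addr0; first by rewrite mul1r mulrC.
by move=> y hy; rewrite eq_sym (negbTE hy) mul0r mul0r.
Qed.

Lemma card_T m : #|{ffun 'I_m -> 'I_3}| = (3 ^ m)%N.
Proof. by rewrite card_ffun !card_ord. Qed.

Lemma upper : in_1QFA_Rn Leq.
Proof.
exists (ordinal 6 : finType), M6, (1/3), Dn.
have c0 m : 0 < ((3 ^ m)%N%:R : RR) by rewrite ltr0n expn_gt0.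
split.
- exact: M6_wf.
- lra.
- lra.
- move=> n; split.
    move=> y; rewrite ffunE; apply: sumr_ge0 => t _; apply: divr_ge0 => //; exact: ler0n.
  transitivity (\sum_y Dn n y * 1); first by apply: eq_bigr => y _; rewrite mulr1.
  by rewrite (D_avg (fun _ => 1)) -mulr_suml sumr_const card_T divff // gt_eqF.
move=> x; rewrite D_avg.
have sx : size x = size x by [].
under eq_bigr do rewrite out_M6 ?all_zip2 ?all_enc // hash_sum //.
have cp := c0 (size x)./2.
case: (boolP (Leq x)) => hL.
  under eq_bigr do rewrite Leq_hash // eqxx.
  rewrite -mulr_suml sumr_const card_T divff ?gt_eqF //; lra.
have hc := count_bad sx hL.
set c : RR := (3 ^ (size x)./2)%:R in cp hc *.
set N := \sum_t _ in hc.
have e : \sum_(t : {ffun 'I_((size x)./2) -> 'I_3})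
     ((\sum_(j < (size x)./2) hashf x t j != 0)%:R / c) = (c - N) / c.
  rewrite -mulr_suml; congr (_ / _).
  rewrite (eq_bigr (fun t => 1 - (\sum_(j < (size x)./2) hashf x t j == 0)%:R)); last first.
    by move=> t _; case: eqP => _; rewrite ?subrr ?subr0.
  by rewrite sumrB sumr_const card_T.
rewrite e.
have -> : (c - N) / c = 1 - N / c by field; rewrite gt_eqF.
have : N / c <= 1 / 3 by rewrite ler_pdivrMr //; lra.
lra.
Qed.

Theorem corollary5p3 :
  exists (S : finType) (L : pred (seq S)), ~ (in_1QFA_n L <-> in_1QFA_Rn L).
Proof.
exists bool, Leq => -[_ H].
have [G [M [eps [h [wf e0 e1 hx]]]]] := H upper.
exact: (lower wf e1 hx).
Qed.
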